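(* Let $(\mathcal{L},\mathcal{G})$ be a flag built lattice and $F\in\mathcal{L}\setminus\{\hat0,\hat1\}$. Then the restriction $(\mathcal{L}^F,\mathcal{G}^F)$ and the contraction $(\mathcal{L}_F,\mathcal{G}_F)$ are flag built lattices.
   Context: $\mathcal{L}$ is a finite geometric lattice. A building set is $\mathcal{G}\subseteq\mathcal{L}\setminus\{\hat0\}$ such that for every $F\neq\hat0$ the join map $\prod_{G\in\max\mathcal{G}_{\leqslant F}}[\hat0,G]\to[\hat0,F]$ is a poset isomorphism ($\max\mathcal{G}_{\leqslant F}$ = maximal elements of $\{G\in\mathcal{G}:G\leqslant F\}$); $(\mathcal{L},\mathcal{G})$ is a built lattice. $\mathcal{S}\subseteq\mathcal{G}$ is nested if for every antichain $A\subseteq\mathcal{S}$ and every $\{S_1,\dots,S_k\}\subseteq A$, $k\geqslant2$, $S_1\vee\dots\vee S_k\notin\mathcal{G}$. $\mathbf{N}(\mathcal{L},\mathcal{G})$ is the simplicial complex of nested sets contained in $\mathcal{G}\setminus\max\mathcal{G}$; $(\mathcal{L},\mathcal{G})$ is flag if $\mathbf{N}(\mathcal{L},\mathcal{G})$ is a flag complex (all minimal non-faces have size $2$). Restriction: $\mathcal{L}^F=[\hat0,F]$, $\mathcal{G}^F=\mathcal{G}\cap[\hat0,F]$. Contraction: $\mathcal{L}_F=[F,\hat1]$, $\mathcal{G}_F=\{F\vee G:G\in\mathcal{G}\}\setminus\{F\}$ (with $F$ as bottom element of $\mathcal{L}_F$). *)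

(* Defs.v *)
(* A finite lattice L is a finTBLatticeType T; intervals
   [lo, hi] of T are treated as (sub)lattices: they are convex sublattices,
   so order, meet, and joins of nonempty families agree with those of T. *)
From HB Require Import structures.
From mathcomp Require Import all_boot all_order.
Set Implicit Arguments. Unset Strict Implicit. Unset Printing Implicit Defensive.
Import Order.TTheory.
Local Open Scope order_scope.

Section BuiltLattices.
Context {d : Order.disp_t} {T : finTBLatticeType d}.

Definition in_itv (lo hi x : T) : bool := (lo <= x) && (x <= hi).

Definition covers (x y : T) : bool :=
  (x < y) && [forall z : T, ~~ ((x < z) && (z < y))].

Definition atoms (lo hi : T) : {set T} :=
  [set a | in_itv lo hi a & covers lo a].

(* join of a family inside the interval with bottom lo (empty join = lo) *)
Definition ijoin (lo : T) (A : {set T}) : T := lo `|` \join_(x in A) x.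

Definition geometric (lo hi : T) : Prop :=
  [/\ lo <= hi,
      (forall x, in_itv lo hi x -> x = ijoin lo [set a in atoms lo hi | a <= x]) &
      (forall x y, in_itv lo hi x -> in_itv lo hi y ->
         covers (x `&` y) x -> covers y (x `|` y))].

Definition maxel (S : {set T}) : {set T} :=
  [set x in S | [forall y in S, (x <= y) ==> (y == x)]].

(* elements of the product poset prod_{g in M} [lo, g], represented by
   functions (only their values on M matter) *)
Definition in_prod (lo : T) (M : {set T}) (f : {ffun T -> T}) : Prop :=
  forall g, g \in M -> (lo <= f g) && (f g <= g).

Definition prod_join (lo : T) (M : {set T}) (f : {ffun T -> T}) : T :=
  lo `|` \join_(g in M) f g.

Definition building (lo hi : T) (G : {set T}) : Prop :=
  G \subset [set x | in_itv lo hi x & x != lo] /\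
  forall F : T, in_itv lo hi F -> F != lo ->
    let M := maxel [set g in G | g <= F] in
    (* the join map prod_{g in M} [lo,g] -> [lo,F] is a poset isomorphism:
       surjective and an order embedding *)
    (forall y, in_itv lo F y -> exists f : {ffun T -> T}, in_prod lo M f /\ prod_join lo M f = y) /\
    (forall f f' : {ffun T -> T}, in_prod lo M f -> in_prod lo M f' ->
       ((forall g, g \in M -> f g <= f' g) <-> prod_join lo M f <= prod_join lo M f')).

Definition built (lo hi : T) (G : {set T}) : Prop :=
  geometric lo hi /\ building lo hi G.

Definition antichain (A : {set T}) : Prop :=
  forall x y, x \in A -> y \in A -> x <= y -> x = y.

Definition nested (G S : {set T}) : Prop :=
  S \subset G /\
  forall A : {set T}, A \subset S -> antichain A ->
    forall B : {set T}, B \subset A -> (1 < #|B|)%N -> (\join_(x in B) x) \notin G.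

(* vertex set of the nested set complex N(L,G) *)
Definition nvertices (G : {set T}) : {set T} := G :\: maxel G.

(* faces of N(L,G): nested sets contained in G \ max G; flag: all minimal
   non-faces have size 2 *)
Definition flag (G : {set T}) : Prop :=
  forall N : {set T}, N \subset nvertices G -> ~ nested G N ->
    (forall N' : {set T}, N' \proper N -> nested G N') -> #|N| = 2%N.

Definition flag_built (lo hi : T) (G : {set T}) : Prop :=
  built lo hi G /\ flag G.

Definition restrG (G : {set T}) (F : T) : {set T} := [set g in G | g <= F].
Definition contrG (G : {set T}) (F : T) : {set T} := [set F `|` g | g in G] :\ F.

End BuiltLattices.

(* Main.v *)
Require Import Defs.
From HB Require Import structures.
From mathcomp Require Import all_boot all_order.
From Stdlib Require Import Classical.
Set Implicit Arguments. Unset Strict Implicit. Unset Printing Implicit Defensive.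
Import Order.LTheory.
Local Open Scope order_scope.

Lemma maxelP {d} {T : finTBLatticeType d} (S : {set T}) m :
  reflect (m \in S /\ forall y, y \in S -> m <= y -> y = m) (m \in maxel S).
Proof.
rewrite /maxel inE; apply: (iffP andP) => [[mS /forall_inP H]|[mS H]]; split=> //.
- by move=> y yS my; apply/eqP; exact: (implyP (H y yS)).
- by apply/forall_inP => y yS; apply/implyP => my; rewrite (H y yS my).
Qed.

Lemma maxel_sub {d} {T : finTBLatticeType d} (S : {set T}) : maxel S \subset S.
Proof. by apply/subsetP => m /maxelP []. Qed.

Lemma max_exists {d} {T : finTBLatticeType d} (S : {set T}) x :
  x \in S -> exists2 m, m \in maxel S & x <= m.
Proof.
move=> xS.
have xA : (x \in S) && (x <= x) by rewrite xS lexx.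
case: (@arg_maxnP _ x (fun y => (y \in S) && (x <= y)) (fun y => #|[set z | z <= y]|) xA).
move=> m /andP [mS xm] Hmax.
exists m => //; apply/maxelP; split => // y yS my.
apply/eqP; apply: contraT => ney.
have : (#|[set z | (z <= m)%O]| < #|[set z | (z <= y)%O]|)%N.
  apply: proper_card; apply/properP; split.
    by apply/subsetP => z; rewrite !inE => zm; apply: le_trans zm my.
  by exists y; rewrite !inE ?lexx //; apply: contra ney => ym; rewrite eq_le ym my.
have yA : (y \in S) && (x <= y) by rewrite yS (le_trans xm my).
by move=> H; have := leq_trans H (Hmax y yA); rewrite ltnn.
Qed.

Lemma itv_bt {d} {T : finTBLatticeType d} (X : T) : in_itv \bot \top X.
Proof. by rewrite /in_itv le0x lex1. Qed.
Lemma itv0 {d} {T : finTBLatticeType d} (X y : T) : y <= X -> in_itv \bot X y.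
Proof. by rewrite /in_itv le0x. Qed.

Notation Mx G X := (maxel [set g in G | g <= X]).

Lemma Mx_le {d} {T : finTBLatticeType d} (G : {set T}) X m : m \in Mx G X -> (m \in G) && (m <= X).
Proof. by move/maxelP => [] ; rewrite inE. Qed.

Lemma bld_i0 {d} {T : finTBLatticeType d} (G : {set T}) X :
  building \bot \top G -> X != \bot ->
  forall y, y <= X -> y = \join_(m in Mx G X) (y `&` m).
Proof.
case=> _ H XnB y yX.
have [surj _] := H X (itv_bt X) XnB.
have [f [fp pj]] := surj y (itv0 yX).
apply/le_anti/andP; split; last by apply/joinsP => m _; exact: leIl.
rewrite -{1}pj /prod_join join0x; apply/joinsP => g gM.
apply: (joins_min (j := g)) => //; rewrite lexI; apply/andP; split.
  by rewrite -pj /prod_join join0x; exact: (joins_sup (j := g)).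
by case/andP: (fp g gM).
Qed.

Lemma bld_ii0 {d} {T : finTBLatticeType d} (G : {set T}) X :
  building \bot \top G -> X != \bot ->
  forall t : {ffun T -> T}, (forall m, m \in Mx G X -> t m <= m) ->
  forall m0, m0 \in Mx G X -> (\join_(m in Mx G X) t m) `&` m0 = t m0.
Proof.
move=> Hb XnB t tm m0 m0M.
have i0 := bld_i0 Hb XnB.
case: Hb => _ H.
have [_ emb] := H X (itv_bt X) XnB.
set y := \join_(m in Mx G X) t m.
have yX : y <= X.
  by apply/joinsP => m mM; apply: le_trans (tm m mM) _; case/andP: (Mx_le mM).
pose e := [ffun x => y `&` x].
have ep : in_prod \bot (Mx G X) e by move=> g _; rewrite ffunE le0x leIr.
have tp : in_prod \bot (Mx G X) t by move=> g gM; rewrite le0x tm.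
apply/le_anti/andP; split; last first.
  by rewrite lexI tm // andbT; exact: (joins_sup (j := m0)).
have := (proj2 (emb e t ep tp)); rewrite /prod_join !join0x.
have -> : \join_(g in Mx G X) e g = y.
  by rewrite [RHS](i0 y yX); apply: eq_bigr => g _; rewrite ffunE.
by move=> /(_ (lexx _)) /(_ m0 m0M); rewrite ffunE.
Qed.

Lemma to_building {d} {T : finTBLatticeType d} (lo hi : T) (G : {set T}) :
  G \subset [set x | in_itv lo hi x & x != lo] ->
  (forall X, in_itv lo hi X -> X != lo ->
     [/\ (forall m, m \in Mx G X -> lo <= m),
         (forall y, in_itv lo X y -> y = lo `|` \join_(m in Mx G X) (y `&` m)) &
         (forall t : {ffun T -> T}, in_prod lo (Mx G X) t ->
            forall m0, m0 \in Mx G X -> (lo `|` \join_(m in Mx G X) t m) `&` m0 = t m0)]) ->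
  building lo hi G.
Proof.
move=> sub H; split => // X HX Xlo /=.
have [Hlo Hi Hii] := H X HX Xlo; split.
  move=> y Hy; exists [ffun x => y `&` x]; split.
    move=> g gM; rewrite ffunE lexI leIr andbT; case/andP: Hy => -> _.
    by rewrite Hlo.
  rewrite [RHS](Hi y Hy) /prod_join; congr (_ `|` _).
  by apply: eq_bigr => g _; rewrite ffunE.
move=> f f' fp fp'; split.
  move=> Hle; rewrite /prod_join; apply: leU2 (lexx _) _.
  by apply/joinsP => g gM; apply: (joins_min (j := g)) gM (Hle g gM).
move=> Hle g gM; rewrite -(Hii f fp g gM) -(Hii f' fp' g gM).
exact: leI2 Hle (lexx g).
Qed.

Lemma join_maxel {d} {T : finTBLatticeType d} (G : {set T}) y :
  building \bot \top G -> y = \join_(p in Mx G y) p.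
Proof.
move=> Hb; apply/le_anti/andP; split; last first.
  by apply/joinsP => p /Mx_le /andP [].
have [->|ynb] := eqVneq y \bot; first exact: le0x.
rewrite {1}(bld_i0 Hb ynb (lexx y)); apply/joinsP => m mM.
by apply: (joins_min (j := m)) mM _; exact: leIr.
Qed.

Lemma cross {d} {T : finTBLatticeType d} (G : {set T}) X m m' F :
  building \bot \top G -> X != \bot -> m \in Mx G X -> m' \in Mx G X -> m != m' ->
  F <= X -> (F `|` m) `&` m' = F `&` m'.
Proof.
move=> Hb XnB mM m'M nmm' FX.
pose t := [ffun x => if x == m then m else F `&` x].
have tm : forall x, x \in Mx G X -> t x <= x.
  by move=> x _; rewrite ffunE; case: eqP => [->|_]; rewrite ?lexx ?leIr.
have -> : F `|` m = \join_(x in Mx G X) t x.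
  apply/le_anti/andP; split.
    rewrite leUx; apply/andP; split.
      rewrite {1}(bld_i0 Hb XnB FX); apply/joinsP => x xM.
      apply: (joins_min (j := x)) xM _; rewrite ffunE.
      by case: eqP => [->|_]; rewrite ?leIr ?lexx.
    by apply: (joins_min (j := m)) mM _; rewrite ffunE eqxx.
  apply/joinsP => x _; rewrite ffunE; case: eqP => _; first exact: leUr.
  by apply: lexUl; exact: leIl.
rewrite (bld_ii0 Hb XnB tm m'M) ffunE.
by rewrite eq_sym (negbTE nmm').
Qed.

Lemma restr_geom {d} {T : finTBLatticeType d} (F : T) :
  geometric (\bot : T) \top -> geometric \bot F.
Proof.
case=> _ Hat Hsm; split; first exact: le0x.
  move=> x /andP [_ xF]; rewrite [LHS](Hat x (itv_bt x)); congr ijoin.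
  apply/setP => a; rewrite !inE /in_itv !le0x !lex1 /=.
  apply/andP/andP => [][c ax]; split => //.
    by rewrite c (le_trans ax xF).
  by case/andP: c.
by move=> x y _ _; apply: Hsm; exact: itv_bt.
Qed.

Lemma restr_building {d} {T : finTBLatticeType d} (G : {set T}) (F : T) :
  building \bot \top G -> building \bot F (restrG G F).
Proof.
case=> sub H; split.
  apply/subsetP => g; rewrite !inE => /andP [gG gF].
  have := subsetP sub g gG; rewrite !inE /in_itv => /andP [/andP [-> _] ->].
  by rewrite gF.
move=> F' /andP [_ F'F] F'nb.
have -> : [set g in restrG G F | g <= F'] = [set g in G | g <= F'].
  apply/setP => g; rewrite !inE; apply/andP/andP => [[/andP [] //]|[gG gF']].
  by rewrite gG gF' (le_trans gF' F'F).
exact: H F' (itv_bt F') F'nb.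
Qed.

Lemma nested_restr {d} {T : finTBLatticeType d} (G : {set T}) (F : T) (N : {set T}) :
  N \subset restrG G F -> nested G N <-> nested (restrG G F) N.
Proof.
move=> NR; have RG : restrG G F \subset G by apply/subsetP => x; rewrite inE => /andP [].
split.
  case=> _ H; split => // A AN antA B BA cB.
  by apply: contra (H A AN antA B BA cB); apply: (subsetP RG).
case=> _ H; split; first exact: subset_trans NR RG.
move=> A AN antA B BA cB; have := H A AN antA B BA cB.
apply: contra => jG; rewrite inE jG /=.
apply/joinsP => x xB.
have := subsetP NR x (subsetP AN x (subsetP BA x xB)).
by rewrite inE => /andP [].
Qed.

Lemma restr_flag {d} {T : finTBLatticeType d} (G : {set T}) (F : T) :
  flag G -> flag (restrG G F).
Proof.
move=> Hf N NV nN Hmin.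
have NR : N \subset restrG G F.
  by apply: subset_trans NV _; apply/subsetP => x; rewrite inE => /andP [].
apply: Hf.
- apply/subsetP => x xN; have := subsetP NV x xN.
  rewrite /nvertices in_setD => /andP [xnm xR]; move: (xR); rewrite inE => /andP [xG xF].
  rewrite in_setD xG andbT.
  apply: contra xnm => /maxelP [_ Hm]; apply/maxelP; split; first by rewrite inE xG xF.
  by move=> y; rewrite inE => /andP [yG _]; apply: Hm.
- by move/(nested_restr NR).
- move=> N' N'N; apply/(nested_restr (subset_trans (proper_sub N'N) NR)).
  exact: Hmin.
Qed.

Lemma contr_geom {d} {T : finTBLatticeType d} (F : T) :
  geometric (\bot : T) \top -> geometric F \top.
Proof.
case=> _ Hat Hsm; split; first exact: lex1.
  move=> x /andP [Fx _]; apply/le_anti/andP; split; last first.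
    rewrite leUx Fx /=; apply/joinsP => a; rewrite inE => /andP [_ ->] //.
  rewrite {1}(Hat x (itv_bt x)) /ijoin join0x; apply/joinsP => a.
  rewrite inE => /andP [aA ax].
  have [aF|naF] := boolP (a <= F); first exact: lexUl.
  apply: lexUr; apply: (joins_min (j := F `|` a)); last exact: leUr.
  rewrite !inE /in_itv leUl lex1 leUx Fx ax /= andbT.
  move: aA; rewrite inE /in_itv le0x lex1 /= => ca.
  rewrite joinC; apply: Hsm; rewrite ?itv_bt //.
  suff -> : a `&` F = \bot by [].
  apply/eqP; apply: contraT => H.
  move: ca => /andP [_ /forallP /(_ (a `&` F))]; rewrite !lt_def H le0x leIl /=.
  rewrite andbT negbK => /eqP /esym /meet_idPl aF; by rewrite aF in naF.
by move=> x y _ _; apply: Hsm; exact: itv_bt.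
Qed.

Lemma contrGP {d} {T : finTBLatticeType d} (G : {set T}) (F Y : T) :
  reflect (Y != F /\ exists2 g, g \in G & Y = F `|` g) (Y \in contrG G F).
Proof.
rewrite /contrG in_setD1; apply: (iffP andP).
  case=> nYF H; split => //; case: (imsetP H) => g gG ->; by exists g.
case=> nYF [g gG eY]; split => //; rewrite eY; exact: imset_f.
Qed.

Lemma MF2 {d} {T : finTBLatticeType d} (G : {set T}) (F X m : T) :
  building \bot \top G -> X != \bot -> F <= X ->
  m \in Mx G X -> ~~ (m <= F) -> F `|` m \in Mx (contrG G F) X.
Proof.
move=> Hb XnB FX mM nmF.
have /andP [mG mX] := Mx_le mM.
apply/maxelP; split.
  rewrite inE leUx FX mX !andbT; apply/contrGP; split; last by exists m.
  by apply: contra nmF => /eqP e; rewrite -e leUr.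
move=> y; rewrite inE => /andP [/contrGP [nyF [g gG ey]] yX] Hle; subst y.
have gX : g <= X by apply: le_trans yX; exact: leUr.
have gS : g \in [set g in G | g <= X] by rewrite inE gG gX.
have [m' m'M gm'] := max_exists gS.
have [em|nem] := eqVneq m m'.
  subst m'; apply/le_anti; rewrite Hle andbT leUx leUl /=.
  exact: le_trans gm' (leUr _ _).
have : m <= (F `|` m') `&` m.
  rewrite lexI lexx andbT; apply: le_trans (le_trans (leUr m F) Hle) _.
  by rewrite leUx leUl /= (le_trans gm' (leUr _ _)).
have nem2 : m' != m by rewrite eq_sym.
rewrite (cross Hb XnB m'M mM nem2 FX).
by move=> H; move: nmF; rewrite (le_trans H (leIl _ _)).
Qed.

Lemma MF1 {d} {T : finTBLatticeType d} (G : {set T}) (F X Y : T) :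
  building \bot \top G -> X != \bot -> F <= X ->
  Y \in Mx (contrG G F) X -> exists m, [/\ m \in Mx G X, ~~ (m <= F) & Y = F `|` m].
Proof.
move=> Hb XnB FX /maxelP [].
rewrite inE => /andP [/contrGP [nYF [g gG eY]] YX] Hmax.
have gX : g <= X by apply: le_trans YX; rewrite eY; exact: leUr.
have gS : g \in [set g in G | g <= X] by rewrite inE gG gX.
have [m mM gm] := max_exists gS.
have nmF : ~~ (m <= F).
  apply: contra nYF => mF; rewrite eY; apply/eqP/le_anti.
  by rewrite leUx lexx (le_trans gm mF) leUl.
exists m; split => //.
have /maxelP [] := MF2 Hb XnB FX mM nmF.
rewrite inE => /andP [H1 H2] _.
apply: esym; apply: Hmax; first by rewrite inE H1 H2.
by rewrite eY; apply: leU2 (lexx F) gm.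
Qed.

Lemma contr_building {d} {T : finTBLatticeType d} (G : {set T}) (F : T) :
  building \bot \top G -> F != \bot -> building F \top (contrG G F).
Proof.
move=> Hb FnB; apply: to_building.
  apply/subsetP => Y /contrGP [nYF [g _ eY]].
  by rewrite inE /in_itv eY leUl lex1 /= -eY.
move=> X /andP [FX _] XnF.
have XnB : X != \bot.
  by apply: contraNneq FnB => eX; apply/eqP/le_anti; rewrite le0x -eX FX.
have i0 := bld_i0 Hb XnB.
have FXi := FX.
split.
- by move=> Y /(MF1 Hb XnB FX) [m [_ _ ->]]; exact: leUl.
- move=> y /andP [Fy yX]; apply/le_anti/andP; split; last first.
    by rewrite leUx Fy /=; apply/joinsP => Y _; exact: leIl.
  rewrite {1}(i0 y yX); apply/joinsP => m mM.
  have [mF|nmF] := boolP (m <= F).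
    by apply: lexUl; exact: le_trans (leIr _ _) mF.
  apply: lexUr; apply: (joins_min (j := F `|` m)); first exact: MF2.
  by apply: leI2 (lexx y) (leUr _ _).
- move=> t tp Y0 Y0M.
  have [m0 [m0M nm0F eY0]] := MF1 Hb XnB FX Y0M.
  set Z := F `|` _.
  have /andP [FtY0 tY0Y0] := tp Y0 Y0M.
  apply/le_anti/andP; split; last first.
    rewrite lexI tY0Y0 andbT; apply: lexUr; exact: (joins_sup (j := Y0)).
  pose u := [ffun x => (F `&` x) `|` (t (F `|` x) `&` x)].
  have Hu : forall x, x \in Mx G X -> u x <= x.
    by move=> x _; rewrite ffunE leUx !leIr.
  have Hzu : Z = \join_(x in Mx G X) u x.
    apply/le_anti/andP; split.
      rewrite leUx; apply/andP; split.
        rewrite {1}(i0 F FX); apply/joinsP => x xM.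
        by apply: (joins_min (j := x)) xM _; rewrite ffunE leUl.
      apply/joinsP => Y YM.
      have [m [mM nmF eY]] := MF1 Hb XnB FX YM.
      have /andP [_ tYY] := tp Y YM.
      have tYX : t Y <= X by apply: le_trans tYY _; case/andP: (Mx_le YM).
      rewrite (i0 (t Y) tYX); apply/joinsP => m' m'M.
      have [em|nem] := eqVneq m' m.
        subst m'; apply: (joins_min (j := m)) mM _.
        by rewrite ffunE -eY leUr.
      have nem2 : m != m' by rewrite eq_sym.
      have Hc := cross Hb XnB mM m'M nem2 FX.
      apply: (joins_min (j := m')) m'M _; rewrite ffunE; apply: lexUl.
      by rewrite -Hc; apply: leI2 (lexx _); rewrite -eY.
    apply/joinsP => x xM; rewrite ffunE leUx; apply/andP; split.
      by apply: lexUl; exact: leIl.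
    have [xF|nxF] := boolP (x <= F).
      by apply: lexUl; apply: le_trans (leIr _ _) xF.
    apply: lexUr; apply: leIxl; apply: (joins_sup (j := F `|` x)).
    exact: MF2.
  have ZY0X : Z `&` Y0 <= X by apply: leIxr; case/andP: (Mx_le Y0M).
  rewrite (i0 _ ZY0X); apply/joinsP => m mM.
  have [em|nem] := eqVneq m m0.
    subst m; apply: le_trans (_ : Z `&` m0 <= _).
      by apply: leI2 (leIl _ _) (lexx _).
    rewrite {1}Hzu (bld_ii0 Hb XnB Hu m0M) ffunE -eY0 leUx.
    by rewrite (le_trans (leIl _ _) FtY0) leIl.
  apply: le_trans (_ : Y0 `&` m <= _); first exact: leI2 (leIr _ _) (lexx _).
  have nem2 : m0 != m by rewrite eq_sym.
  rewrite eY0 (cross Hb XnB m0M mM nem2 FX).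
  by apply: le_trans (leIl _ _) _; rewrite -eY0.
Qed.

Lemma join2 {d} {T : finTBLatticeType d} (a b : T) : \join_(x in [set a; b]) x = a `|` b.
Proof.
apply/le_anti/andP; split.
  by apply/joinsP => x; rewrite !inE => /orP [] /eqP ->; rewrite ?leUl ?leUr.
by rewrite leUx; apply/andP; split; apply: (joins_sup (j := _)); rewrite !inE eqxx ?orbT.
Qed.

Lemma flag_pair {d} {T : finTBLatticeType d} (G : {set T}) :
  flag G -> forall n (N : {set T}), (#|N| < n)%N -> N \subset nvertices G -> ~ nested G N ->
  exists a b, [/\ a \in N, b \in N, a != b & a `|` b \in G].
Proof.
move=> Hf; elim=> [|n IH] N // cN NV nN.
have NG : N \subset G by apply: subset_trans NV _; apply/subsetP => x; rewrite inE => /andP [].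
have [Hmin|] := classic (forall N' : {set T}, N' \proper N -> nested G N'); last first.
  move=> H0; have [N' HN'] := not_all_ex_not _ _ H0; have [pN' nN'] := imply_to_and _ _ HN'.
  have cN' : (#|N'| < n)%N by apply: leq_trans (proper_card pN') _.
  have [a [b [aN bN nab abG]]] := IH N' cN' (subset_trans (proper_sub pN') NV) nN'.
  by exists a, b; split => //; apply: (subsetP (proper_sub pN')).
have c2 := Hf N NV nN Hmin.
have /cards2P [a [b [nab eN]]] : #|N| == 2 by rewrite c2.
exists a, b; split => //; rewrite ?eN ?inE ?eqxx ?orbT //.
apply: NNPP => nabG; apply: nN; split => // A AN antA B BA cB.
have /eqP eB : B == N.
  by rewrite eqEcard (subset_trans BA AN) c2.
by rewrite eB eN join2; apply/negP.
Qed.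

Lemma contr_pair {d} {T : finTBLatticeType d} (G : {set T}) (F : T) :
  building \bot \top G -> flag G -> F != \bot ->
  forall B : {set T}, B \subset contrG G F -> antichain B -> (1 < #|B|)%N ->
  \join_(x in B) x \in contrG G F ->
  exists Y1 Y2, [/\ Y1 \in B, Y2 \in B, Y1 != Y2 & Y1 `|` Y2 \in contrG G F].
Proof.
move=> Hb Hf FnB B BC antB cB /contrGP [XnF [h hG eX]].
set X := \join_(x in B) x in XnF eX.
have FX : F <= X by rewrite eX leUl.
have XnB : X != \bot.
  by apply: contraNneq FnB => e; apply/eqP/le_anti; rewrite le0x -e FX.
have i0 := bld_i0 Hb XnB.
have hX : h <= X by rewrite eX leUr.
have hS : h \in [set g in G | g <= X] by rewrite inE hG hX.
have [m mM hm] := max_exists hS.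
have /andP [mG mX] := Mx_le mM.
have nmF : ~~ (m <= F).
  apply: contra XnF => mF; apply/eqP/le_anti; rewrite FX andbT eX leUx lexx.
  exact: le_trans hm mF.
have Hoth : forall m', m' \in Mx G X -> m' != m -> m' <= F.
  move=> m' m'M nm'.
  have /andP [_ m'X] := Mx_le m'M.
  have nm2 : m != m' by rewrite eq_sym.
  have : m' <= (F `|` m) `&` m'.
    rewrite lexI lexx andbT; apply: le_trans m'X _.
    by rewrite eX; apply: leU2 (lexx _) hm.
  rewrite (cross Hb XnB mM m'M nm2 FX) => H; exact: le_trans H (leIl _ _).
have XFm : X = F `|` m.
  apply/le_anti; rewrite leUx FX mX !andbT eX; exact: leU2 (lexx _) hm.
have YX : forall Y, Y \in B -> Y <= X by move=> Y YB; exact: (joins_sup (j := Y)).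
have FY : forall Y, Y \in B -> F <= Y.
  by move=> Y /(subsetP BC) /contrGP [_ [g _ ->]]; exact: leUl.
pose N1 := [set n | [exists Y in B, (n \in Mx G Y) && (F `|` n == Y)]].
have Hn_ex : forall Y, Y \in B -> exists2 n, n \in N1 & F `|` n = Y.
  move=> Y YB; have /contrGP [nYF [g gG eY]] := subsetP BC Y YB.
  have gS : g \in [set g in G | g <= Y] by rewrite inE gG eY leUr.
  have [n nM gn] := max_exists gS.
  have /andP [_ nY] := Mx_le nM.
  have eFn : F `|` n = Y.
    apply/le_anti; rewrite leUx FY // nY /= {1}eY; exact: leU2 (lexx _) gn.
  exists n => //; rewrite inE; apply/existsP; exists Y; rewrite YB nM eFn eqxx //.
have Hn_prop : forall n, n \in N1 -> exists Y,
    [/\ Y \in B, n \in Mx G Y, F `|` n = Y, ~~ (n <= F) & n <= m].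
  move=> n; rewrite inE => /existsP [Y /and3P [YB nM /eqP eY]].
  have nnF : ~~ (n <= F).
    have /contrGP [nYF _] := subsetP BC Y YB.
    by apply: contra nYF => nF; rewrite -eY (join_l nF).
  exists Y; split => //.
  have /andP [nG nY] := Mx_le nM.
  have nS : n \in [set g in G | g <= X] by rewrite inE nG (le_trans nY (YX Y YB)).
  have [m'' m''M nm''] := max_exists nS.
  have [e|ne] := eqVneq m'' m; first by rewrite -e.
  by move: nnF; rewrite (le_trans nm'' (Hoth m'' m''M ne)).
set W := \join_(n in N1) n.
have Wm : W <= m by apply/joinsP => n /Hn_prop [Y [_ _ _ _ ->]].
have Hm : m = (F `&` m) `|` W.
  pose u := [ffun x => if x == m then (F `&` m) `|` W else F `&` x].
  have Hu : forall x, x \in Mx G X -> u x <= x.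
    move=> x _; rewrite ffunE; case: eqP => [->|_]; last exact: leIr.
    by rewrite leUx leIr Wm.
  have Ju : \join_(x in Mx G X) u x = X.
    apply/le_anti/andP; split.
      apply/joinsP => x xM; rewrite ffunE; case: eqP => _.
        by rewrite leUx (le_trans (leIl _ _) FX) (le_trans Wm mX).
      exact: le_trans (leIl _ _) FX.
    have XFW : X <= F `|` W.
      apply/joinsP => Y YB; have [n nN1 <-] := Hn_ex Y YB.
      by apply: leU2 (lexx _) _; exact: (joins_sup (j := n)).
    apply: le_trans XFW _; rewrite leUx; apply/andP; split.
      rewrite {1}(i0 F FX); apply/joinsP => x xM.
      apply: (joins_min (j := x)) xM _; rewrite ffunE.
      by case: eqP => [->|_]; rewrite ?leUl ?lexx.
    by apply: (joins_min (j := m)) mM _; rewrite ffunE eqxx leUr.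
  by rewrite -{1}(meet_r mX) -{1}Ju (bld_ii0 Hb XnB Hu mM) ffunE eqxx.
pose P := Mx G (F `&` m).
pose S := P :|: N1.
pose A := maxel S.
have SG : S \subset G.
  apply/subsetP => s; rewrite in_setU => /orP [/Mx_le /andP [] //|/Hn_prop [Y [_ nM _ _ _]]].
  by case/andP: (Mx_le nM).
have JS : \join_(s in S) s = m.
  by rewrite joins_setU -(join_maxel (F `&` m) Hb) [RHS]Hm.
have JA : \join_(a in A) a = m.
  apply/le_anti/andP; split; first by rewrite -JS; apply: le_joins; exact: maxel_sub.
  rewrite -{1}JS; apply/joinsP => s sS.
  have [a aA sa] := max_exists sS.
  exact: (joins_min (j := a)) aA sa.
have AS : A \subset S by exact: maxel_sub.
have Anm : forall a, a \in A -> a != m.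
  move=> a aA; apply/eqP => eam; subst a.
  move: (subsetP AS m aA); rewrite in_setU => /orP [/Mx_le /andP [_ mFm]|].
    by move: nmF; rewrite (le_trans mFm (leIl _ _)).
  move=> /Hn_prop [Y [YB _ eY _ _]].
  have : B \subset [set Y].
    apply/subsetP => Y' Y'B; rewrite inE; apply/eqP; apply: antB => //.
    by rewrite -eY -XFm; exact: YX.
  by move/subset_leq_card; rewrite cards1 leqNgt cB.
have AV : A \subset nvertices G.
  apply/subsetP => a aA; rewrite in_setD (subsetP SG a (subsetP AS a aA)) andbT.
  apply/negP => /maxelP [_ Hmax].
  have am : a <= m by rewrite -JA; exact: (joins_sup (j := a)).
  by move: (Anm a aA); rewrite (Hmax m mG am) eqxx.
have antA : antichain A.
  by move=> x y /maxelP [_ Hx] /maxelP [yS _] xy; apply: esym; apply: Hx.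
have cA : (1 < #|A|)%N.
  rewrite ltnNge; apply/negP => cA.
  have : (#|A| == 0) || (#|A| == 1) by case: #|A| cA => [|[|]].
  case/orP => [/eqP/cards0_eq eA|/cards1P [a eA]].
    by move: JA; rewrite eA big_set0 => em; move: nmF; rewrite -em le0x.
  move: JA; rewrite eA big_set1 => eam.
  by move: (Anm a); rewrite eA inE eqxx eam eqxx => /(_ isT).
have nA : ~ nested G A.
  case=> _ H; have := H A (subxx A) antA A (subxx A) cA.
  by rewrite JA mG.
have [a [b [aA bA nab abG]]] := flag_pair Hf (ltnSn #|A|) AV nA.
have aS := subsetP AS a aA; have bS := subsetP AS b bA.
have mixed : forall p n, p \in P -> n \in N1 -> p \in A -> n \in A -> n `|` p \in G -> False.
  move=> p n pP nN1 pA nA' npG.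
  have [Y [YB nM eY nnF _]] := Hn_prop n nN1.
  have /andP [_ pFm] := Mx_le pP.
  have pF : p <= F := le_trans pFm (leIl _ _).
  have /andP [_ nY] := Mx_le nM.
  have /maxelP [_ Hmax] := nM.
  have npY : n `|` p <= Y by rewrite leUx nY -eY (le_trans pF (leUl _ _)).
  have npS : n `|` p \in [set g in G | g <= Y] by rewrite inE npG npY.
  have e := Hmax (n `|` p) npS (leUl _ _).
  have pn : p <= n by rewrite -e leUr.
  have epn := antA p n pA nA' pn.
  by move: nnF; rewrite -epn pF.
have [aP|aN1] := boolP (a \in P).
  have [bP|bN1] := boolP (b \in P).
    have /maxelP [_ Ha] := aP; have /maxelP [_ Hb'] := bP.
    have /andP [_ aFm] := Mx_le aP; have /andP [_ bFm] := Mx_le bP.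
    have abS : a `|` b \in [set g in G | g <= F `&` m] by rewrite inE abG leUx aFm bFm.
    have e1 := Ha _ abS (leUl _ _); have e2 := Hb' _ abS (leUr _ _).
    by move: nab; rewrite -{1}e1 e2 eqxx.
  have bN : b \in N1 by move: bS; rewrite in_setU (negbTE bN1).
  by exfalso; apply: (mixed a b aP bN aA bA); rewrite joinC.
have aN : a \in N1 by move: aS; rewrite in_setU (negbTE aN1).
have [bP|bN1] := boolP (b \in P).
  by exfalso; apply: (mixed b a bP aN bA aA).
have bN : b \in N1 by move: bS; rewrite in_setU (negbTE bN1).
have [Ya [YaB aM eYa naF _]] := Hn_prop a aN.
have [Yb [YbB bM eYb nbF _]] := Hn_prop b bN.
exists Ya, Yb; split => //.
  apply/eqP => eY; rewrite -eY in bM.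
  have YnB : Ya != \bot.
    by apply: contraNneq FnB => e; apply/eqP/le_anti; rewrite le0x -e FY.
  have FYa : F <= Ya by exact: FY.
  have /andP [_ bY] := Mx_le bM.
  have := cross Hb YnB aM bM nab FYa.
  rewrite eYa (meet_r bY) => eb.
  by move: nbF; rewrite eb leIl.
apply/contrGP; split; last first.
  by exists (a `|` b) => //; rewrite -eYa -eYb joinACA joinxx.
rewrite -eYa -eYb; apply: contra naF => /eqP e.
rewrite -e; exact: le_trans (leUr a F) (leUl _ _).
Qed.

Lemma contr_flag {d} {T : finTBLatticeType d} (G : {set T}) (F : T) :
  building \bot \top G -> flag G -> F != \bot -> flag (contrG G F).
Proof.
move=> Hb Hf FnB N NV nN Hmin.
have NC : N \subset contrG G F.
  by apply: subset_trans NV _; apply/subsetP => x; rewrite in_setD => /andP [].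
have [A [B [AN antA BA cB jB]]] : exists A B : {set T}, [/\ A \subset N, antichain A, B \subset A,
    (1 < #|B|)%N & \join_(x in B) x \in contrG G F].
  apply: NNPP => H; apply: nN; split => // A AN antA B BA cB; apply/negP => jB.
  by apply: H; exists A, B; split.
have antB : antichain B by move=> x y xB yB; apply: antA; apply: (subsetP BA).
have BN : B \subset N := subset_trans BA AN.
have [Y1 [Y2 [Y1B Y2B nY YG]]] :=
  contr_pair Hb Hf FnB (subset_trans BN NC) antB cB jB.
pose N' := [set Y1; Y2].
have N'N : N' \subset N.
  by apply/subsetP => y; rewrite !inE => /orP [] /eqP ->; apply: (subsetP BN).
have cN' : #|N'| = 2 by rewrite cards2 nY.
have nN' : ~ nested (contrG G F) N'.
  case=> _ H.
  have antN' : antichain N'.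
    by move=> x y; rewrite !inE => /orP [] /eqP -> /orP [] /eqP ->; apply: antB.
  have c2 : (1 < #|N'|)%N by rewrite cN'.
  have := H N' (subxx _) antN' N' (subxx _) c2.
  by rewrite join2 YG.
have eN : N' = N.
  apply/eqP; rewrite eqEsubset N'N /=; apply: contraT => nsub.
  by exfalso; apply: nN'; apply: Hmin; rewrite properE N'N.
by rewrite -eN.
Qed.

Theorem proposition3p17 (d : Order.disp_t) (T : finTBLatticeType d)
  (G : {set T}) (F : T) :
  flag_built \bot \top G -> F != \bot -> F != \top ->
  flag_built \bot F (restrG G F) /\ flag_built F \top (contrG G F).
Proof.
move=> [[Hg Hb] Hf] FnB _; split; split.
- by split; [exact: restr_geom | exact: restr_building].
- exact: restr_flag.
- by split; [exact: contr_geom | exact: contr_building].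
- exact: contr_flag.
Qed.
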